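(* With $I_z$ as in the context, $I_z$ is stable under right multiplication by $\frac{1+v}{2}$, so it is a right $\mathcal O_L$-module via $\frac{1+\sqrt{-N}}{2}\mapsto$ right multiplication by $\frac{1+v}{2}$; and as a right $\mathcal O_L$-module, $I_z\cong J\oplus J$, where $J=a\mathbb Z+\frac{b-\sqrt{-N}}{2}\mathbb Z\subset\mathcal O_L$ (an ideal of $\mathcal O_L$ in the class determined by $Q$).
   Context: Let $D<-4$ be the discriminant of an imaginary quadratic field $K=\mathbb Q(\sqrt D)$ with $|D|$ prime. Let $N$ be a prime, split in the ring of integers of $K$, such that $-N$ is the discriminant of $L=\mathbb Q(\sqrt{-N})$ with ring of integers $\mathcal O_L$. Fix a prime ideal $\mathcal N$ of $\mathcal O_K$ of norm $N$, conjugate $\bar{\mathcal N}$; for a primitive integral ideal $\mathfrak a$ of $\mathcal O_K$ of norm prime to $N$, write $\mathfrak a\bar{\mathcal N}=a_1N\mathbb Z+\frac{-b_1+\sqrt D}{2}\mathbb Z$ with $a_1,b_1\in\mathbb Z$. Let $Q=[a,b,c]$ be a primitive positive definite form with $b^2-4ac=-N$. Let $B'=(D,-N)_{\mathbb Q}$ with basis $1,u,v,uv$, $u^2=D$, $v^2=-N$, $uv=-vu$. Define $I_z=\mathbb Zx_1+\mathbb Zx_2+\mathbb Zy_1+\mathbb Zy_2$ with $x_1=\frac{b_1-u}{2a_1N}\,av$, $x_2=\frac{b_1-u}{2a_1N}\cdot\frac{N+bv}{2}$, $y_1=\frac{b-v}{2}$, $y_2=-a$. *)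

(* Defs.v *)
From HB Require Import structures.
From mathcomp Require Import all_boot all_order all_algebra.
Set Implicit Arguments. Unset Strict Implicit. Unset Printing Implicit Defensive.
Import Order.TTheory GRing.Theory Num.Theory.
Local Open Scope ring_scope.

Definition sqfree_int (m : int) : Prop :=
  m != 0 /\ forall p : nat, prime p -> ~ ((p%:Z ^+ 2) %| m)%Z.

Definition is_fund_disc (d : int) : Prop :=
  d != 1 /\
  ( ((d %% 4)%Z = 1 /\ sqfree_int d) \/
    (exists m : int, d = 4 * m /\ ((m %% 4)%Z = 2 \/ (m %% 4)%Z = 3) /\ sqfree_int m) ).

(* the rational prime p splits in the ring of integers of Q(sqrt d),
   d a fundamental discriminant: Kronecker symbol (d/p) = 1 *)
Definition splits_in (d : int) (p : nat) : Prop :=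
  if odd p then ~ (p%:Z %| d)%Z /\ exists x : int, (p%:Z %| x ^+ 2 - d)%Z
  else (d %% 8)%Z = 1.

(** ** The quaternion algebra (alpha, beta)_Q with basis 1, u, v, uv,
       u^2 = alpha, v^2 = beta, uv = -vu.  Quat c0 c1 c2 c3 = c0 + c1 u + c2 v + c3 uv. *)
Record quat := Quat { q0 : rat; q1 : rat; q2 : rat; q3 : rat }.

Definition qadd (x y : quat) : quat :=
  Quat (q0 x + q0 y) (q1 x + q1 y) (q2 x + q2 y) (q3 x + q3 y).

Definition qscale (c : rat) (x : quat) : quat :=
  Quat (c * q0 x) (c * q1 x) (c * q2 x) (c * q3 x).

Definition qmul (alpha beta : rat) (x y : quat) : quat :=
  Quat (q0 x * q0 y + alpha * q1 x * q1 y + beta * q2 x * q2 y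
          - alpha * beta * q3 x * q3 y)
       (q0 x * q1 y + q1 x * q0 y + beta * (q3 x * q2 y - q2 x * q3 y))
       (q0 x * q2 y + q2 x * q0 y + alpha * (q1 x * q3 y - q3 x * q1 y))
       (q0 x * q3 y + q3 x * q0 y + q1 x * q2 y - q2 x * q1 y).

Definition Bmul (D : int) (N : nat) := qmul (D%:~R) (- (N%:R)).

Definition in_span4 (g1 g2 g3 g4 x : quat) : Prop :=
  exists k1 k2 k3 k4 : int,
    x = qadd (qadd (qscale k1%:~R g1) (qscale k2%:~R g2))
             (qadd (qscale k3%:~R g3) (qscale k4%:~R g4)).

Definition wz (N : nat) (a1 b1 : int) : quat :=
  qscale (2 * a1%:~R * N%:R)^-1 (Quat b1%:~R (-1) 0 0).

Definition x1 (D : int) (N : nat) (a1 b1 a : int) : quat :=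
  Bmul D N (wz N a1 b1) (Quat 0 0 a%:~R 0).
Definition x2 (D : int) (N : nat) (a1 b1 b : int) : quat :=
  Bmul D N (wz N a1 b1) (Quat (N%:R / 2) 0 (b%:~R / 2) 0).
Definition y1 (b : int) : quat := Quat (b%:~R / 2) 0 (- (1 / 2)) 0.
Definition y2 (a : int) : quat := Quat (- a%:~R) 0 0 0.

Definition Iz (D : int) (N : nat) (a1 b1 a b : int) (x : quat) : Prop :=
  in_span4 (x1 D N a1 b1 a) (x2 D N a1 b1 b) (y1 b) (y2 a) x.

Definition omegaB : quat := Quat (1/2) 0 (1/2) 0.

(** ** L = Q(sqrt(-N)):  LQ p q = p + q sqrt(-N) *)
Record Lnum := LQ { lre : rat; lim : rat }.

Definition Ladd (z w : Lnum) : Lnum := LQ (lre z + lre w) (lim z + lim w).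
Definition Lmul (N : nat) (z w : Lnum) : Lnum :=
  LQ (lre z * lre w - N%:R * lim z * lim w) (lre z * lim w + lim z * lre w).

Definition omegaL : Lnum := LQ (1/2) (1/2).

Definition inJ (a b : int) (z : Lnum) : Prop :=
  exists k1 k2 : int,
    z = Ladd (LQ (k1%:~R * a%:~R) 0) (LQ (k2%:~R * (b%:~R / 2)) (k2%:~R * (- (1/2)))).

(** Right O_L-module structures: on I_z via right multiplication by (1+v)/2,
    on J (+) J by componentwise multiplication by (1+sqrt(-N))/2.  Since
    O_L = Z[omegaL], an isomorphism of right O_L-modules is exactly an
    additive bijection I_z -> J x J intertwining these two actions. *)
Definition OL_iso_Iz_JJ (D : int) (N : nat) (a1 b1 a b : int)
    (f : quat -> Lnum * Lnum) : Prop :=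
  [/\ (forall x, Iz D N a1 b1 a b x -> inJ a b (f x).1 /\ inJ a b (f x).2),
      (forall x y, Iz D N a1 b1 a b x -> Iz D N a1 b1 a b y ->
         f (qadd x y) = (Ladd (f x).1 (f y).1, Ladd (f x).2 (f y).2)),
      (forall x, Iz D N a1 b1 a b x ->
         f (Bmul D N x omegaB) = (Lmul N (f x).1 omegaL, Lmul N (f x).2 omegaL)),
      (forall x y, Iz D N a1 b1 a b x -> Iz D N a1 b1 a b y -> f x = f y -> x = y) &
      (forall z1 z2, inJ a b z1 -> inJ a b z2 ->
         exists2 x, Iz D N a1 b1 a b x & f x = (z1, z2))].

(* Main.v *)
Require Import Defs.
From HB Require Import structures.
From mathcomp Require Import all_boot all_order all_algebra.
From Stdlib Require Import Ring Field.
Import Order.TTheory GRing.Theory Num.Theory.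
Local Open Scope ring_scope.

Definition radd (x y : rat) : rat := x + y.
Definition rmul (x y : rat) : rat := x * y.
Definition ropp (x : rat) : rat := - x.
Definition rsub (x y : rat) : rat := x - y.
Definition rinv (x : rat) : rat := x^-1.
Definition rdiv (x y : rat) : rat := x / y.
Definition rzero : rat := 0.
Definition rone : rat := 1.
Definition ri (z : int) : rat := z%:~R.
Definition rn (n : nat) : rat := n%:R.

Lemma rat_field_th : @field_theory rat rzero rone radd rmul rsub ropp rdiv rinv eq.
Proof.
rewrite /radd /rmul /ropp /rsub /rinv /rdiv /rzero /rone.
constructor.
- constructor.
  + exact: add0r. + exact: addrC. + exact: addrA. + exact: mul1r. + exact: mulrC.
  + exact: mulrA. + exact: mulrDl. + by []. + exact: subrr.
- by [].
- by [].
- by move=> p /eqP hp; rewrite mulVf.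
Qed.
Add Field ratF : rat_field_th.

Lemma addE (x y : rat) : x + y = radd x y. Proof. by []. Qed.
Lemma mulE (x y : rat) : x * y = rmul x y. Proof. by []. Qed.
Lemma oppE (x : rat) : - x = ropp x. Proof. by []. Qed.
Lemma invE (x : rat) : x^-1 = rinv x. Proof. by []. Qed.
Lemma zeroE : (0 : rat) = rzero. Proof. by []. Qed.
Lemma oneE : (1 : rat) = rone. Proof. by []. Qed.
Lemma twoE : (2 : rat) = 1 + 1. Proof. by []. Qed.
Lemma fourE : (4 : rat) = 1 + 1 + 1 + 1. Proof. by []. Qed.
Lemma intrE (z : int) : z%:~R = ri z. Proof. by []. Qed.
Lemma natrE (n : nat) : n%:R = rn n. Proof. by []. Qed.
Lemma ri1 : ri 1 = 1. Proof. by []. Qed.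
Lemma ri2 : ri 2 = 1 + 1. Proof. by []. Qed.
Lemma ri4 : ri 4 = 1 + 1 + 1 + 1. Proof. by []. Qed.
Lemma two_neq0 : radd rone rone <> rzero. Proof. by []. Qed.

Ltac rnorm := rewrite ?twoE ?fourE ?natrE ?intrE ?ri1 ?ri2 ?ri4 ?addE ?mulE ?oppE ?invE ?zeroE ?oneE.
Ltac eqrat := match goal with |- @eq _ ?a ?b => change (@eq rat a b) end.
Lemma rmul_neq0 x y : x <> rzero -> y <> rzero -> rmul x y <> rzero.
Proof. rewrite /rmul /rzero => /eqP hx /eqP hy; apply/eqP; by rewrite mulf_neq0. Qed.
Lemma ropp_neq0 x : x <> rzero -> ropp x <> rzero.
Proof. rewrite /ropp /rzero => /eqP hx; apply/eqP; by rewrite oppr_eq0. Qed.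
Ltac rside := repeat match goal with |- _ /\ _ => split end; repeat (apply: rmul_neq0 || apply: ropp_neq0); try assumption; try exact two_neq0.
Ltac rfield := rnorm; eqrat; field; rside.
Ltac rring := rnorm; eqrat; ring.

Definition fmap (N : nat) (a1 b1 : int) (x : quat) : Lnum * Lnum :=
  (LQ (- (2 * a1%:~R * N%:R * q3 x)) (2 * a1%:~R * q1 x),
   LQ (q0 x + b1%:~R * q1 x) (q2 x + b1%:~R * q3 x)).

Definition comb (g1 g2 g3 g4 : quat) (k1 k2 k3 k4 : int) : quat :=
  qadd (qadd (qscale k1%:~R g1) (qscale k2%:~R g2))
       (qadd (qscale k3%:~R g3) (qscale k4%:~R g4)).

Definition spanJ (a b p1 p2 : int) : Lnum :=
  Ladd (LQ (p1%:~R * a%:~R) 0) (LQ (p2%:~R * (b%:~R / 2)) (p2%:~R * (- (1/2)))).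

Lemma f_span D N a1 b1 a b k1 k2 k3 k4 :
  ri a1 <> rzero -> rn N <> rzero ->
  fmap N a1 b1 (comb (x1 D N a1 b1 a) (x2 D N a1 b1 b) (y1 b) (y2 a) k1 k2 k3 k4)
  = (spanJ a b k1 k2, spanJ a b (- k4) k3).
Proof.
move=> hA hN.
rewrite /fmap /comb /spanJ /x1 /x2 /y1 /y2 /Bmul /wz /qmul /qadd /qscale /Ladd /= intrN.
congr (_, _); congr LQ; rfield.
Qed.

Lemma f_add N a1 b1 x y :
  fmap N a1 b1 (qadd x y) = (Ladd (fmap N a1 b1 x).1 (fmap N a1 b1 y).1,
                             Ladd (fmap N a1 b1 x).2 (fmap N a1 b1 y).2).
Proof.
case: x => ????; case: y => ????.
rewrite /fmap /qadd /Ladd /=; congr (_, _); congr LQ; rring.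
Qed.

Lemma f_omega D N a1 b1 x :
  fmap N a1 b1 (Bmul D N x omegaB) =
  (Lmul N (fmap N a1 b1 x).1 omegaL, Lmul N (fmap N a1 b1 x).2 omegaL).
Proof.
case: x => ????.
rewrite /fmap /Bmul /qmul /omegaB /omegaL /Lmul /=; congr (_, _); congr LQ; rfield.
Qed.

Lemma f_inv N a1 b1 x : ri a1 <> rzero -> rn N <> rzero ->
  let f := fmap N a1 b1 x in
  x = Quat (lre f.2 - b1%:~R * (lim f.1 / (2 * a1%:~R)))
           (lim f.1 / (2 * a1%:~R))
           (lim f.2 - b1%:~R * (lre f.1 / (- (2 * a1%:~R * N%:R))))
           (lre f.1 / (- (2 * a1%:~R * N%:R))).
Proof.
move=> hA hN; case: x => ????.
rewrite /fmap /=; congr Quat; rfield.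
Qed.

Lemma f_inj N a1 b1 x y : ri a1 <> rzero -> rn N <> rzero ->
  fmap N a1 b1 x = fmap N a1 b1 y -> x = y.
Proof.
move=> hA hN E.
by rewrite (@f_inv N a1 b1 x hA hN) (@f_inv N a1 b1 y hA hN) E.
Qed.

Lemma Jomega N a b c t p1 p2 :
  ri b = ri t + ri t + 1 -> rn N = 4 * ri a * ri c - ri b * ri b ->
  Lmul N (spanJ a b p1 p2) omegaL = spanJ a b (p1 * (t + 1) + p2 * c) (- p1 * a - p2 * t).
Proof.
move=> hb hN.
rewrite /spanJ /Lmul /Ladd /omegaL /= !(intrD, intrN, intrM, intrB).
congr LQ; rnorm; rewrite ?hN ?hb; rnorm; eqrat; field; rside.
Qed.

Lemma via_rat (x y : int) : ri x = ri y -> x = y.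
Proof. by move=> h; apply: (@intr_inj rat). Qed.

Lemma b_odd (N : nat) (a b c : int) : prime N -> is_fund_disc (- N%:Z) ->
  b ^+ 2 - 4 * a * c = - (N%:Z) -> exists t, b = t * 2 + 1.
Proof.
move=> pN [_ [[h4 _]|[m [hm _]]]] hQ.
- exists (b %/ 2)%Z.
  have hb := divz_eq b 2.
  have h0 := @modz_ge0 b 2 isT; have h1 := @ltz_pmod b 2 isT.
  move: (b %/ 2)%Z (b %% 2)%Z hb h0 h1 => t s hb h0 h1.
  have hs : s != 0.
    apply/eqP=> s0; move: h4; rewrite -hQ hb s0 addr0.
    have -> : (t * 2) ^+ 2 - 4 * a * c = (t * t - a * c) * 4.
      apply: via_rat; rewrite /ri expr2 !(intrB, intrM); rring.
    by rewrite modzMl.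
  rewrite hb; congr (_ + _).
  clear hb; move: s h0 h1 hs; case=> [[|[|n]]|n] //.
- have h : (4 %| N)%N.
    have : (4 %| N%:Z)%Z.
      apply/dvdzP; exists (- m); by rewrite mulNr mulrC -hm opprK.
    by rewrite dvdzE.
  have h2 : (2 %| N)%N := dvdn_trans (isT : (2 %| 4)%N) h.
  move/(@prime_nt_dvdP 2 N pN isT): h2 => e.
  by rewrite -e in h.
Qed.

Theorem mainTheorem15 (D : int) (N : nat) (r a1 b1 a b c : int) :
  D < -4 -> prime `|D|%N -> is_fund_disc D ->
  prime N -> is_fund_disc (- (N%:Z)) -> splits_in D N ->
  (4 * N%:Z %| r ^+ 2 - D)%Z ->
  a1 != 0 -> coprime `|a1|%N N ->
  (4 * a1 * N%:Z %| b1 ^+ 2 - D)%Z ->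
  (2 * N%:Z %| b1 + r)%Z ->
  0 < a -> b ^+ 2 - 4 * a * c = - (N%:Z) -> gcdz (gcdz a b) c = 1 ->
  (forall x, Iz D N a1 b1 a b x -> Iz D N a1 b1 a b (Bmul D N x omegaB)) /\
  (exists f : quat -> Lnum * Lnum, OL_iso_Iz_JJ D N a1 b1 a b f).
Proof.
move=> hD pD fD pN fN sp hr ha1 ca1 hb1 hrb ha hQ hg.
have hA : ri a1 <> rzero.
  by rewrite /ri /rzero; apply/eqP; rewrite intr_eq0.
have hN0 : rn N <> rzero.
  by rewrite /rn /rzero; apply/eqP; rewrite pnatr_eq0 -lt0n prime_gt0.
have [t ht] := @b_odd N a b c pN fN hQ.
have hbr : ri b = ri t + ri t + 1.
  by rewrite ht /ri intrD intrM; rring.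
have E : ri b * ri b - ri 4 * ri a * ri c = - ri N%:Z.
  by rewrite /ri -!intrM -intrB -intrN -hQ expr2.
have hNr : rn N = 4 * ri a * ri c - ri b * ri b.
  have -> : rn N = - ( - ri N%:Z) by rewrite opprK.
  by rewrite -E opprB.
have JO := fun p1 p2 => @Jomega N a b c t p1 p2 hbr hNr.
split.
- move=> x [k1 [k2 [k3 [k4 hx]]]].
  exists (k1 * (t + 1) + k2 * c), (- k1 * a - k2 * t),
         (- (- k4) * a - k3 * t), (- ((- k4) * (t + 1) + k3 * c)).
  apply: (@f_inj N a1 b1 _ _ hA hN0).
  have S1 := f_span D N a1 b1 a b k1 k2 k3 k4 hA hN0.
  have S2 := f_span D N a1 b1 a b (k1 * (t + 1) + k2 * c) (- k1 * a - k2 * t)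
         (- (- k4) * a - k3 * t) (- ((- k4) * (t + 1) + k3 * c)) hA hN0.
  rewrite /comb in S1 S2.
  by rewrite f_omega hx S1 S2 /= !JO !opprK.
- exists (fmap N a1 b1); split.
  + move=> x [k1 [k2 [k3 [k4 hx]]]].
    have S := f_span D N a1 b1 a b k1 k2 k3 k4 hA hN0; rewrite /comb in S.
    rewrite hx S /=; split; [exists k1, k2 | exists (- k4), k3]; done.
  + move=> x y _ _; exact: f_add.
  + move=> x _; exact: f_omega.
  + move=> x y _ _; exact: f_inj hA hN0.
  + move=> z1 z2 [p1 [p2 h1]] [m1 [m2 h2]].
    exists (comb (x1 D N a1 b1 a) (x2 D N a1 b1 b) (y1 b) (y2 a) p1 p2 m2 (- m1)).
      by exists p1, p2, m2, (- m1).
    by rewrite (f_span D N a1 b1 a b p1 p2 m2 (- m1) hA hN0) opprK h1 h2.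
Qed.
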